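(* Let $E,E'$ be Stone spaces and let $\Phi\colon\mathscr{C}(E)\to\mathscr{C}(E')$ be a graph isomorphism. Then for every pants decomposition $\Gamma$ of $E$, the set $\Phi(\Gamma)$ is a pants decomposition of $E'$, and $\Phi$ restricts to a graph isomorphism $A(\Gamma)\to A(\Phi(\Gamma))$.
   Context: A Stone space is a compact, Hausdorff, totally disconnected space. A cut of $E$ is an unordered partition of $E$ into two disjoint clopen sets $U,V$, written $U\sqcup V$; it is non-peripheral if each of $U,V$ contains at least two points. Two cuts $U\sqcup V$, $U'\sqcup V'$ cross if all four sets $U\cap U'$, $U\cap V'$, $V\cap U'$, $V\cap V'$ are nonempty; otherwise they are compatible. The complex of cuts $\mathscr{C}(E)$ is the simplicial graph whose vertices are the non-peripheral cuts, with edges between distinct compatible cuts. A pants decomposition of $E$ is a countable collection $\Gamma$ of non-peripheral cuts such that: (1) any two cuts in $\Gamma$ are compatible; (2) every non-peripheral cut $\gamma\notin\Gamma$ crosses some cut of $\Gamma$; (3) every non-peripheral cut $\gamma\notin\Gamma$ crosses only finitely many cuts of $\Gamma$. Two cuts $\gamma_i,\gamma_j\in\Gamma$ are adjacent in $\Gamma$ if there is a non-peripheral cut $\gamma$ crossing $\gamma_i$ and $\gamma_j$ and no other cut of $\Gamma$. The adjacency graph $A(\Gamma)$ is the simplicial graph with vertex set $\Gamma$ and an edge between $\gamma_i$ and $\gamma_j$ whenever they are adjacent in $\Gamma$. *)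

(* Defs.v *)
From mathcomp Require Import all_boot all_order.
From mathcomp Require Import all_classical all_reals all_analysis.
Set Implicit Arguments. Unset Strict Implicit. Unset Printing Implicit Defensive.
Local Open Scope classical_set_scope.

Definition stone_space (T : topologicalType) : Prop :=
  compact [set: T] /\ hausdorff_space T /\ totally_disconnected [set: T].

Definition two_points {T : Type} (A : set T) : Prop :=
  exists x y, x <> y /\ A x /\ A y.

(* A non-peripheral cut U ⊔ V, represented as the unordered pair {U, V}
   (a set of two sets) with V = complement of U, U clopen, and each of
   U, V containing at least two points. *)
Definition is_npcut {T : topologicalType} (C : set (set T)) : Prop :=
  exists U : set T, clopen U /\ two_points U /\ two_points (~` U) /\
    C = [set U; ~` U].

Definition npcut (T : topologicalType) := {C : set (set T) | is_npcut C}.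

Definition cross {T : topologicalType} (c d : npcut T) : Prop :=
  forall A B, proj1_sig c A -> proj1_sig d B -> (A `&` B) !=set0.

Definition compatible {T : topologicalType} (c d : npcut T) : Prop :=
  ~ cross c d.

Definition cc_edge {T : topologicalType} (c d : npcut T) : Prop :=
  c <> d /\ compatible c d.

Definition cc_graph_iso {T T' : topologicalType} (Phi : npcut T -> npcut T') : Prop :=
  bijective Phi /\ forall c d, cc_edge c d <-> cc_edge (Phi c) (Phi d).

Definition pants_decomposition {T : topologicalType} (G : set (npcut T)) : Prop :=
  countable G /\
  (forall c d, G c -> G d -> compatible c d) /\
  (forall g, ~ G g -> exists2 c, G c & cross g c) /\
  (forall g, ~ G g -> finite_set [set c | G c /\ cross g c]).

Definition adjacent_in {T : topologicalType} (G : set (npcut T)) (gi gj : npcut T) : Prop :=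
  G gi /\ G gj /\
  exists g : npcut T, cross g gi /\ cross g gj /\
    (forall c, G c -> cross g c -> c = gi \/ c = gj).

Definition adj_edge {T : topologicalType} (G : set (npcut T)) (gi gj : npcut T) : Prop :=
  gi <> gj /\ adjacent_in G gi gj.

(* Main.v *)
Require Import Defs.
From mathcomp Require Import all_boot all_order.
From mathcomp Require Import all_classical all_reals all_analysis.
Local Open Scope classical_set_scope.

Lemma cross_irr (T : topologicalType) (c : npcut T) : ~ cross c c.
Proof.
move=> H; have [U [_ [_ [_ eC]]]] := proj2_sig c.
have [x [Ux nUx]] := H U (~` U) ltac:(rewrite eC; by left) ltac:(rewrite eC; by right).
exact: nUx Ux.
Qed.

Lemma cross_pres (T T' : topologicalType) (Phi : npcut T -> npcut T')
  (hPhi : cc_graph_iso Phi) c d : cross c d <-> cross (Phi c) (Phi d).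
Proof.
case: hPhi => [[g fg gf] He].
have [->|cd] := pselect (c = d).
  by split => H; exfalso; move: H; apply: cross_irr.
have Pcd : Phi c <> Phi d by move=> h; apply: cd; rewrite -(fg c) h fg.
have [H1 H2] := He c d.
split => H.
  apply: contrapT => nc; have [_ nc'] := H2 (conj Pcd nc); exact: nc' H.
apply: contrapT => nc; have [_ nc'] := H1 (conj cd nc); exact: nc' H.
Qed.

Theorem mainTheorem6 (E E' : topologicalType)
  (hE : stone_space E) (hE' : stone_space E')
  (Phi : npcut E -> npcut E') (hPhi : cc_graph_iso Phi) :
  forall G : set (npcut E), pants_decomposition G ->
    pants_decomposition (Phi @` G) /\
    (forall gi gj, G gi -> G gj ->
       (adj_edge G gi gj <-> adj_edge (Phi @` G) (Phi gi) (Phi gj))).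
Proof.
have CP : forall c d, cross c d <-> cross (Phi c) (Phi d) := cross_pres _ _ _ hPhi.
have [[g fg gf] _] := hPhi.
have inj : injective Phi by move=> x y h; rewrite -(fg x) h fg.
move=> G [cG [cmp [cov fin]]]; split; [split; [|split; [|split]]|].
- exact: card_le_trans (card_image_le _ _) cG.
- move=> _ _ [c Gc <-] [d Gd <-] H; apply: (cmp c d Gc Gd); exact: (proj2 (CP c d) H).
- move=> h nh; have ngh : ~ G (g h) by move=> Gg; apply: nh; exists (g h).
  have [c Gc Hc] := cov _ ngh; exists (Phi c); first by exists c.
  have := proj1 (CP _ _) Hc; by rewrite gf.
- move=> h nh; have ngh : ~ G (g h) by move=> Gg; apply: nh; exists (g h).
  have -> : [set c | (Phi @` G) c /\ cross h c] =
            Phi @` [set c | G c /\ cross (g h) c].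
    apply/seteqP; split.
      move=> _ [[c Gc <-] Hc]; exists c => //; split => //.
      apply: (proj2 (CP _ _)); by rewrite gf.
    move=> _ [c [Gc Hc] <-]; split; first by exists c.
    have := proj1 (CP _ _) Hc; by rewrite gf.
  exact: finite_image (fin _ ngh).
- move=> gi gj Gi Gj; split.
  + move=> [ne [_ [_ [h [h1 [h2 hc]]]]]]; split; first by move/inj.
    split; first by exists gi. split; first by exists gj.
    exists (Phi h); split; first exact: (proj1 (CP _ _) h1).
    split; first exact: (proj1 (CP _ _) h2).
    move=> _ [c Gc <-] hh; case: (hc c Gc (proj2 (CP _ _) hh)) => ->; by [left|right].
  + move=> [ne [_ [_ [h [h1 [h2 hc]]]]]]; split; first by move=> e; apply: ne; rewrite e.
    split => //; split => //.
    exists (g h); split; first by apply: (proj2 (CP _ _)); rewrite gf.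
    split; first by apply: (proj2 (CP _ _)); rewrite gf.
    move=> c Gc hh.
    have hh' : cross h (Phi c) by have := proj1 (CP _ _) hh; rewrite gf.
    case: (hc _ (ex_intro2 _ _ c Gc erefl) hh') => /inj->; by [left|right].
Qed.
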